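(* Let $M_1$ and $M_2$ be matroids on disjoint finite ground sets $E_1$ and $E_2$, of ranks $r_1$ and $r_2$. Then $P(M_1\oplus M_2)$ has a nontrivial hyperplane split if and only if $P(M_1)$ or $P(M_2)$ has a nontrivial hyperplane split.
   Context: The direct sum $M_1\oplus M_2$ is the matroid on $E_1\cup E_2$ with bases $\{B_1\cup B_2: B_1\in\mathcal{B}(M_1), B_2\in\mathcal{B}(M_2)\}$. For a matroid $N$ on a finite set $E$, $P(N)=\mathrm{conv}\{\sum_{i\in B}e_i : B \text{ a base of } N\}\subset\mathbb{R}^E$, $e_i$ the standard basis vectors. A hyperplane split of $P(N)$ is an expression $P(N)=P(N_1)\cup P(N_2)$ with $N_1,N_2$ matroids on $E$ such that $P(N_1)\cap P(N_2)$ is a face of both $P(N_1)$ and $P(N_2)$; it is nontrivial if $P(N_1)\neq P(N)$ and $P(N_2)\neq P(N)$. *)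

(* Defs.v *)
From HB Require Import structures.
From mathcomp Require Import all_boot all_order all_algebra.
Set Implicit Arguments. Unset Strict Implicit. Unset Printing Implicit Defensive.
Import Order.TTheory GRing.Theory Num.Theory.
Local Open Scope ring_scope.

Definition is_matroid (E : finType) (Bs : {set {set E}}) : Prop :=
  Bs != set0 /\
  forall B1 B2, B1 \in Bs -> B2 \in Bs ->
    forall x, x \in B1 :\: B2 ->
      exists2 y, y \in B2 :\: B1 & y |: (B1 :\ x) \in Bs.

Definition direct_sum_bases (E1 E2 : finType)
  (Bs1 : {set {set E1}}) (Bs2 : {set {set E2}}) : {set {set (E1 + E2)%type}} :=
  [set ((@inl E1 E2) @: B1) :|: ((@inr E1 E2) @: B2) | B1 : {set E1} in Bs1, B2 : {set E2} in Bs2].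

(* Points of R^E are functions E -> R; subsets of R^E are predicates. *)
Definition indicator (R : realFieldType) (E : finType) (B : {set E}) : E -> R :=
  fun i => (i \in B)%:R.

Definition base_polytope (R : realFieldType) (E : finType) (Bs : {set {set E}})
  (x : E -> R) : Prop :=
  exists lam : {set E} -> R,
    (forall B, B \in Bs -> 0 <= lam B) /\
    \sum_(B in Bs) lam B = 1 /\
    (forall i, x i = \sum_(B in Bs) lam B * indicator R B i).

Arguments indicator R {E} B i.
Arguments base_polytope R {E} Bs x.

Definition is_face (R : realFieldType) (E : finType) (P F : (E -> R) -> Prop) : Prop :=
  exists (c : E -> R) (b : R),
    (forall x, P x -> \sum_i c i * x i <= b) /\
    (forall x, F x <-> (P x /\ \sum_i c i * x i = b)).

Definition same_set (R : realFieldType) (E : finType) (P Q : (E -> R) -> Prop) : Prop :=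
  forall x, P x <-> Q x.

Definition hyperplane_split (R : realFieldType) (E : finType)
  (Bs Bs1 Bs2 : {set {set E}}) : Prop :=
  is_matroid Bs1 /\ is_matroid Bs2 /\
  same_set (base_polytope R Bs)
    (fun x => base_polytope R Bs1 x \/ base_polytope R Bs2 x) /\
  is_face (base_polytope R Bs1)
    (fun x => base_polytope R Bs1 x /\ base_polytope R Bs2 x) /\
  is_face (base_polytope R Bs2)
    (fun x => base_polytope R Bs1 x /\ base_polytope R Bs2 x).

Arguments hyperplane_split R {E} Bs Bs1 Bs2.

Definition has_nontrivial_hyperplane_split (R : realFieldType) (E : finType)
  (Bs : {set {set E}}) : Prop :=
  exists Bs1 Bs2 : {set {set E}},
    hyperplane_split R Bs Bs1 Bs2 /\
    ~ same_set (base_polytope R Bs1) (base_polytope R Bs) /\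
    ~ same_set (base_polytope R Bs2) (base_polytope R Bs).

Arguments has_nontrivial_hyperplane_split R {E} Bs.

(* Main.v *)
Require Import Defs.
From HB Require Import structures.
From mathcomp Require Import all_boot all_order all_algebra.
From Stdlib Require Import Setoid Classical.
Set Implicit Arguments. Unset Strict Implicit. Unset Printing Implicit Defensive.
Import Order.TTheory GRing.Theory Num.Theory.
Local Open Scope ring_scope.

Definition gs (E1 E2 : finType) (a : {set E1}) (y : {set E2}) : {set (E1 + E2)%type} :=
  ((@inl E1 E2) @: a) :|: ((@inr E1 E2) @: y).

Lemma in_gsl (E1 E2 : finType) (a : {set E1}) (y : {set E2}) u :
  (inl u \in gs a y) = (u \in a).
Proof.
rewrite /gs in_setU.
have -> : (inl u \in (@inr E1 E2) @: y) = false by apply/imsetP => -[].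
by rewrite orbF mem_imset //; move=> ? ? [].
Qed.

Lemma in_gsr (E1 E2 : finType) (a : {set E1}) (y : {set E2}) v :
  (inr v \in gs a y) = (v \in y).
Proof.
rewrite /gs in_setU.
have -> : (inr v \in (@inl E1 E2) @: a) = false by apply/imsetP => -[].
by rewrite mem_imset //; move=> ? ? [].
Qed.

Lemma gs_inj (E1 E2 : finType) (a a' : {set E1}) (y y' : {set E2}) :
  gs a y = gs a' y' -> a = a' /\ y = y'.
Proof.
move=> e; split; apply/setP => u.
  by rewrite -(in_gsl a y u) e in_gsl.
by rewrite -(in_gsr a y u) e in_gsr.
Qed.

Lemma memD (E1 E2 : finType) (S : {set {set E1}}) (T : {set {set E2}}) B :
  B \in direct_sum_bases S T <-> exists a y, [/\ a \in S, y \in T & B = gs a y].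
Proof.
split.
  by case/imset2P => a y aS yT ->; exists a, y.
by case=> a [y [aS yT ->]]; apply/imset2P; exists a y.
Qed.

Lemma gsD (E1 E2 : finType) (S : {set {set E1}}) (T : {set {set E2}}) a y :
  (gs a y \in direct_sum_bases S T) = (a \in S) && (y \in T).
Proof.
apply/idP/andP.
  by case/memD => a' [y' [aS yT /gs_inj [-> ->]]].
by case=> aS yT; apply/memD; exists a, y.
Qed.

Lemma big_D (R : realFieldType) (E1 E2 : finType) (S : {set {set E1}}) (T : {set {set E2}})
  (F : {set (E1 + E2)%type} -> R) :
  \sum_(B in direct_sum_bases S T) F B = \sum_(a in S) \sum_(y in T) F (gs a y).
Proof.
rewrite /direct_sum_bases curry_imset2X big_imset /=; last first.
  by move=> [a y] [a' y'] _ _ /= /gs_inj [-> ->].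
rewrite pair_big /=; apply: eq_big => [[a y]|[a y] _ //]; by rewrite in_setX.
Qed.
Lemma ind_gsl (R : realFieldType) (E1 E2 : finType) (a : {set E1}) (y : {set E2}) u :
  indicator R (gs a y) (inl u) = indicator R a u.
Proof. by rewrite /indicator in_gsl. Qed.

Lemma ind_gsr (R : realFieldType) (E1 E2 : finType) (a : {set E1}) (y : {set E2}) v :
  indicator R (gs a y) (inr v) = indicator R y v.
Proof. by rewrite /indicator in_gsr. Qed.

Lemma pre_gsl (E1 E2 : finType) (a : {set E1}) (y : {set E2}) :
  (@inl E1 E2) @^-1: gs a y = a.
Proof. by apply/setP => u; rewrite inE in_gsl. Qed.

Lemma pre_gsr (E1 E2 : finType) (a : {set E1}) (y : {set E2}) :
  (@inr E1 E2) @^-1: gs a y = y.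
Proof. by apply/setP => u; rewrite inE in_gsr. Qed.

Lemma P_prod (R : realFieldType) (E1 E2 : finType) (S : {set {set E1}}) (T : {set {set E2}})
  (x : (E1 + E2)%type -> R) :
  base_polytope R (direct_sum_bases S T) x <->
  base_polytope R S (fun u => x (inl u)) /\ base_polytope R T (fun v => x (inr v)).
Proof.
split.
  case=> lam [h0 [h1 hx]]; split.
    exists (fun a => \sum_(y in T) lam (gs a y)); split; [|split].
    - move=> a aS; apply: sumr_ge0 => y yT; apply: h0; by rewrite gsD aS.
    - by rewrite -big_D.
    - move=> u; rewrite hx big_D; apply: eq_bigr => a _.
      rewrite mulr_suml; apply: eq_bigr => y _; by rewrite ind_gsl.
  exists (fun y => \sum_(a in S) lam (gs a y)); split; [|split].
  - move=> y yT; apply: sumr_ge0 => a aS; apply: h0; by rewrite gsD aS.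
  - by rewrite -exchange_big -big_D.
  - move=> v; rewrite hx big_D exchange_big; apply: eq_bigr => y _.
    rewrite mulr_suml; apply: eq_bigr => a _; by rewrite ind_gsr.
case=> [[la [la0 [la1 hxa]]] [mu [mu0 [mu1 hxm]]]].
exists (fun B : {set (E1 + E2)%type} => la ((@inl E1 E2) @^-1: B) * mu ((@inr E1 E2) @^-1: B)); split; [|split].
- move=> B /memD [a [y [aS yT ->]]]; rewrite pre_gsl pre_gsr; apply: mulr_ge0.
    exact: la0.
  exact: mu0.
- rewrite big_D -la1; apply: eq_bigr => a _.
  under eq_bigr => y _ do rewrite pre_gsl pre_gsr.
  by rewrite -mulr_sumr mu1 mulr1.
- case=> [u|v].
    rewrite hxa big_D; apply: eq_bigr => a _.
    under eq_bigr => y _ do rewrite pre_gsl pre_gsr ind_gsl mulrAC.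
    by rewrite -mulr_sumr mu1 mulr1.
  rewrite hxm big_D exchange_big; apply: eq_bigr => y _.
  under eq_bigr => a _ do rewrite pre_gsl pre_gsr ind_gsr -mulrA mulrC.
  by rewrite -mulr_sumr la1 mulr1.
Qed.
Lemma transfer (R : realFieldType) (E E' : finType)
  (K : {set {set E}} -> {set {set E'}}) (pi : (E' -> R) -> (E -> R))
  (Q : (E' -> R) -> Prop) (lift : (E -> R) -> (E' -> R))
  (B S1 S2 : {set {set E}}) :
  (forall S x, base_polytope R (K S) x <-> base_polytope R S (pi x) /\ Q x) ->
  (forall x1, pi (lift x1) = x1 /\ Q (lift x1)) ->
  (forall c : E -> R, exists c' : E' -> R, forall x, \sum_i c' i * x i = \sum_i c i * pi x i) ->
  (forall c' : E' -> R, exists (c : E -> R) (k : R),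
      forall x1, \sum_i c' i * lift x1 i = \sum_i c i * x1 i + k) ->
  (forall S, is_matroid S <-> is_matroid (K S)) ->
  (hyperplane_split R (K B) (K S1) (K S2) /\
     ~ same_set (base_polytope R (K S1)) (base_polytope R (K B)) /\
     ~ same_set (base_polytope R (K S2)) (base_polytope R (K B))) <->
  (hyperplane_split R B S1 S2 /\
     ~ same_set (base_polytope R S1) (base_polytope R B) /\
     ~ same_set (base_polytope R S2) (base_polytope R B)).
Proof.
move=> hP hl hs1 hs2 hm.
have hL S x1 : base_polytope R (K S) (lift x1) <-> base_polytope R S x1.
  by rewrite hP; case: (hl x1) => -> q; split=> [[]|].
have face_dn S : is_face (base_polytope R (K S))
    (fun x => base_polytope R (K S1) x /\ base_polytope R (K S2) x) ->
  is_face (base_polytope R S) (fun x => base_polytope R S1 x /\ base_polytope R S2 x).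
  case=> c' [b' [hv hc]]; case: (hs2 c') => c [k hk].
  exists c, (b' - k); split.
    move=> x1 /hL /hv; by rewrite hk lerBrDr.
  move=> x1; rewrite -!hL hc hk; split=> -[h1 h2]; split=> //.
    by rewrite -h2 addrK.
  by rewrite h2 subrK.
have face_up S : is_face (base_polytope R S)
    (fun x => base_polytope R S1 x /\ base_polytope R S2 x) ->
  is_face (base_polytope R (K S))
    (fun x => base_polytope R (K S1) x /\ base_polytope R (K S2) x).
  case=> c [b [hv hc]]; case: (hs1 c) => c' hc'.
  exists c', b; split.
    move=> x /hP [/hv]; by rewrite hc'.
  move=> x; rewrite !hP hc'; have := hc (pi x); tauto.
have same_dn S : same_set (base_polytope R S) (base_polytope R B) ->
    same_set (base_polytope R (K S)) (base_polytope R (K B)).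
  move=> h x; rewrite !hP h; tauto.
have same_up S : same_set (base_polytope R (K S)) (base_polytope R (K B)) ->
    same_set (base_polytope R S) (base_polytope R B).
  move=> h x; by rewrite -!hL h.
split.
  case=> [[m1 [m2 [hu [f1 f2]]]] [n1 n2]]; split; last first.
    by split=> h; [apply: n1 | apply: n2]; apply: same_dn.
  split; first by apply/hm.
  split; first by apply/hm.
  split; last by split; [exact: (face_dn S1 f1) | exact: (face_dn S2 f2)].
  move=> x1; by rewrite -!hL hu.
case=> [[m1 [m2 [hu [f1 f2]]]] [n1 n2]]; split; last first.
  by split=> h; [apply: n1 | apply: n2]; apply: same_up.
split; first by apply/hm.
split; first by apply/hm.
split; last by split; [exact: (face_up S1 f1) | exact: (face_up S2 f2)].
move=> x; rewrite !hP hu; tauto.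
Qed.
Lemma vertex_in (R : realFieldType) (E : finType) (S : {set {set E}}) B :
  B \in S -> base_polytope R S (indicator R B).
Proof.
move=> BS; exists (fun C => (C == B)%:R); split; [|split].
- by move=> C _; rewrite ler0n.
- by rewrite (bigD1 B) //= eqxx big1 ?addr0 // => C /andP[_ /negbTE ->].
- move=> i; rewrite (bigD1 B) //= eqxx mul1r big1 ?addr0 // => C /andP[_ /negbTE ->].
  by rewrite mul0r.
Qed.

Lemma vertex_out (R : realFieldType) (E : finType) (S : {set {set E}}) B :
  base_polytope R S (indicator R B) -> B \in S.
Proof.
case=> lam [h0 [h1 hx]].
have [C CS lC] : exists2 C, C \in S & 0 < lam C.
  case: (boolP [exists C in S, 0 < lam C]) => [/exists_inP [C CS lC] | /exists_inPn hn].
    by exists C.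
  exfalso; move: h1; rewrite big1 => [/eqP|C CS]; first by rewrite eq_sym oner_eq0.
  by apply/eqP; rewrite eq_le h0 // andbT leNgt hn.
suff -> : B = C by [].
apply/setP => i.
have := hx i; rewrite /indicator.
case: (boolP (i \in B)) => iB /= e.
  have h : \sum_(C' in S) lam C' * (1 - (i \in C')%:R) = 0.
    under eq_bigr => C' _ do rewrite mulrBr mulr1.
    by rewrite sumrB h1 -e subrr.
  have hn : forall C', C' \in S -> 0 <= lam C' * (1 - (i \in C')%:R).
    move=> C' C'S; apply: mulr_ge0; first exact: h0.
    by case: (i \in C'); rewrite ?subrr ?subr0.
  have := psumr_eq0P hn h CS.
  move/eqP; rewrite mulf_eq0 (gt_eqF lC) /=.
  by case: (i \in C); rewrite ?subr0 ?oner_eq0.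
have h : \sum_(C' in S) lam C' * (i \in C')%:R = 0 by rewrite -e.
have hn : forall C', C' \in S -> 0 <= lam C' * (i \in C')%:R.
  by move=> C' C'S; apply: mulr_ge0; [exact: h0 | rewrite ler0n].
have := psumr_eq0P hn h CS.
move/eqP; rewrite mulf_eq0 (gt_eqF lC) /=.
by case: (i \in C); rewrite ?oner_eq0.
Qed.

Lemma antichain (E : finType) (Bs : {set {set E}}) B B' :
  is_matroid Bs -> B \in Bs -> B' \in Bs -> B \subset B' -> B = B'.
Proof.
case=> _ hex hB hB' sub.
apply/eqP; rewrite eqEsubset sub /=; apply/subsetP => x xB'.
apply/negPn/negP => xB.
have hxd : x \in B' :\: B by rewrite in_setD xB xB'.
have [y] := hex B' B hB' hB x hxd.
rewrite in_setD => /andP[ynB' yB] _.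
by rewrite (subsetP sub y yB) in ynB'.
Qed.

Lemma gs_exl (E1 E2 : finType) (a : {set E1}) (y : {set E2}) u w :
  inl w |: (gs a y :\ inl u) = gs (w |: (a :\ u)) y.
Proof.
apply/setP => -[p|p]; rewrite in_setU1 in_setD1 ?in_gsl ?in_gsr ?in_setU1 ?in_setD1 //.
Qed.

Lemma gs_exr (E1 E2 : finType) (a : {set E1}) (y : {set E2}) u w :
  inr w |: (gs a y :\ inr u) = gs a (w |: (y :\ u)).
Proof.
apply/setP => -[p|p]; rewrite in_setU1 in_setD1 ?in_gsl ?in_gsr ?in_setU1 ?in_setD1 //.
Qed.
Lemma dsum_matroid (E1 E2 : finType) (S : {set {set E1}}) (T : {set {set E2}}) :
  is_matroid S -> is_matroid T -> is_matroid (direct_sum_bases S T).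
Proof.
case=> /set0Pn [a aS] hS [/set0Pn [y yT] hT]; split.
  by apply/set0Pn; exists (gs a y); rewrite gsD aS.
move=> B1 B2 /memD [a1 [y1 [a1S y1T ->]]] /memD [a2 [y2 [a2S y2T ->]]] [u|v].
  rewrite in_setD in_gsl in_gsl => /andP[ua2 ua1].
  have hud : u \in a1 :\: a2 by rewrite in_setD ua2 ua1.
  have [w] := hS a1 a2 a1S a2S u hud.
  rewrite in_setD => /andP [wa1 wa2] hw.
  exists (inl w); first by rewrite in_setD !in_gsl wa1 wa2.
  by rewrite gs_exl gsD hw y1T.
rewrite in_setD in_gsr in_gsr => /andP[vy2 vy1].
have hvd : v \in y1 :\: y2 by rewrite in_setD vy2 vy1.
have [w] := hT y1 y2 y1T y2T v hvd.
rewrite in_setD => /andP [wy1 wy2] hw.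
exists (inr w); first by rewrite in_setD !in_gsr wy1 wy2.
by rewrite gs_exr gsD hw a1S.
Qed.

Lemma slice1 (E1 E2 : finType) (S : {set {set E1}}) (T : {set {set E2}}) y0 :
  is_matroid (direct_sum_bases S T) -> y0 \in T -> is_matroid S.
Proof.
case=> /set0Pn [B /memD [a [y [aS _ _]]]] hD y0T; split.
  by apply/set0Pn; exists a.
move=> a1 a2 a1S a2S u ua.
have h1 : gs a1 y0 \in direct_sum_bases S T by rewrite gsD a1S.
have h2 : gs a2 y0 \in direct_sum_bases S T by rewrite gsD a2S.
have hu : inl u \in gs a1 y0 :\: gs a2 y0 by rewrite in_setD !in_gsl -in_setD.
have [[w|v]] := hD _ _ h1 h2 (inl u) hu; rewrite in_setD ?in_gsl ?in_gsr.
  move=> /andP [wa1 wa2]; rewrite gs_exl gsD => /andP [h _].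
  by exists w => //; rewrite in_setD wa1 wa2.
by move=> /andP[/negP h /h []].
Qed.

Lemma slice2 (E1 E2 : finType) (S : {set {set E1}}) (T : {set {set E2}}) a0 :
  is_matroid (direct_sum_bases S T) -> a0 \in S -> is_matroid T.
Proof.
case=> /set0Pn [B /memD [a [y [_ yT _]]]] hD a0S; split.
  by apply/set0Pn; exists y.
move=> y1 y2 y1T y2T u uy.
have h1 : gs a0 y1 \in direct_sum_bases S T by rewrite gsD a0S.
have h2 : gs a0 y2 \in direct_sum_bases S T by rewrite gsD a0S.
have hu : inr u \in gs a0 y1 :\: gs a0 y2 by rewrite in_setD !in_gsr -in_setD.
have [[v|w]] := hD _ _ h1 h2 (inr u) hu; rewrite in_setD ?in_gsl ?in_gsr.
  by move=> /andP[/negP h /h []].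
move=> /andP [wa1 wa2]; rewrite gs_exr gsD => /andP [_ h].
by exists w => //; rewrite in_setD wa1 wa2.
Qed.
Definition glue (R : realFieldType) (E1 E2 : finType) (x1 : E1 -> R) (x2 : E2 -> R) :
  (E1 + E2)%type -> R := fun i => match i with inl u => x1 u | inr v => x2 v end.

Lemma transfer1 (R : realFieldType) (E1 E2 : finType) (Bs1 S1 S2 : {set {set E1}})
  (Bs2 : {set {set E2}}) :
  is_matroid Bs2 ->
  (hyperplane_split R (direct_sum_bases Bs1 Bs2) (direct_sum_bases S1 Bs2) (direct_sum_bases S2 Bs2) /\
     ~ same_set (base_polytope R (direct_sum_bases S1 Bs2)) (base_polytope R (direct_sum_bases Bs1 Bs2)) /\
     ~ same_set (base_polytope R (direct_sum_bases S2 Bs2)) (base_polytope R (direct_sum_bases Bs1 Bs2))) <->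
  (hyperplane_split R Bs1 S1 S2 /\
     ~ same_set (base_polytope R S1) (base_polytope R Bs1) /\
     ~ same_set (base_polytope R S2) (base_polytope R Bs1)).
Proof.
move=> m2; have [/set0Pn [y0 y0T] _] := m2.
apply: (transfer (K := fun S => direct_sum_bases S Bs2) (pi := fun x u => x (inl u))
   (Q := fun x => base_polytope R Bs2 (fun v => x (inr v)))
   (lift := fun x1 => glue x1 (indicator R y0))).
- move=> S x; exact: P_prod.
- move=> x1; split=> //; exact: vertex_in.
- move=> c; exists (glue c (fun _ => 0)) => x.
  rewrite big_sumType /=; under [X in _ + X]eq_bigr => v _ do rewrite mul0r.
  by rewrite big1_eq addr0.
- move=> c'; exists (fun u => c' (inl u)), (\sum_v c' (inr v) * indicator R y0 v) => x1.
  by rewrite big_sumType.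
- move=> S; split=> h; first exact: dsum_matroid.
  exact: slice1 h y0T.
Qed.

Lemma transfer2 (R : realFieldType) (E1 E2 : finType) (Bs1 : {set {set E1}})
  (Bs2 S1 S2 : {set {set E2}}) :
  is_matroid Bs1 ->
  (hyperplane_split R (direct_sum_bases Bs1 Bs2) (direct_sum_bases Bs1 S1) (direct_sum_bases Bs1 S2) /\
     ~ same_set (base_polytope R (direct_sum_bases Bs1 S1)) (base_polytope R (direct_sum_bases Bs1 Bs2)) /\
     ~ same_set (base_polytope R (direct_sum_bases Bs1 S2)) (base_polytope R (direct_sum_bases Bs1 Bs2))) <->
  (hyperplane_split R Bs2 S1 S2 /\
     ~ same_set (base_polytope R S1) (base_polytope R Bs2) /\
     ~ same_set (base_polytope R S2) (base_polytope R Bs2)).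
Proof.
move=> m1; have [/set0Pn [a0 a0S] _] := m1.
apply: (transfer (K := fun S => direct_sum_bases Bs1 S) (pi := fun x v => x (inr v))
   (Q := fun x => base_polytope R Bs1 (fun u => x (inl u)))
   (lift := fun x2 => glue (indicator R a0) x2)).
- move=> S x; rewrite P_prod; tauto.
- move=> x1; split=> //; exact: vertex_in.
- move=> c; exists (glue (fun _ => 0) c) => x.
  rewrite big_sumType /=; under [X in X + _]eq_bigr => u _ do rewrite mul0r.
  by rewrite big1_eq add0r.
- move=> c'; exists (fun v => c' (inr v)), (\sum_u c' (inl u) * indicator R a0 u) => x1.
  by rewrite big_sumType addrC.
- move=> S; split=> h; first exact: dsum_matroid.
  exact: slice2 h a0S.
Qed.
Lemma gs_mix (E1 E2 : finType) (a : {set E1}) (y : {set E2}) w e :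
  inl w |: (gs a y :\ inr e) = gs (w |: a) (y :\ e).
Proof.
apply/setP => -[p|p]; rewrite in_setU1 in_setD1 ?in_gsl ?in_gsr ?in_setU1 ?in_setD1 //.
Qed.

Lemma rect (E1 E2 : finType) (Bs1 : {set {set E1}}) (Bs2 : {set {set E2}})
  (N : {set {set (E1 + E2)%type}}) a b y :
  is_matroid N -> {subset N <= direct_sum_bases Bs1 Bs2} ->
  is_matroid Bs1 -> is_matroid Bs2 ->
  gs b y \in N -> forall n x, #|x :\: y| = n -> gs a x \in N -> gs a y \in N.
Proof.
move=> mN sub m1 m2 hby; have [_ hex] := mN.
have hyB : y \in Bs2 by have := sub _ hby; rewrite gsD => /andP[].
elim=> [|n IH] x hn hx.
  have hxB : x \in Bs2 by have := sub _ hx; rewrite gsD => /andP[].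
  have sxy : x \subset y by rewrite -setD_eq0; apply/eqP; apply: cards0_eq.
  by rewrite -(antichain m2 hxB hyB sxy).
have [e he] : exists e, e \in x :\: y.
  by apply/set0Pn; rewrite -card_gt0 hn.
have hin : inr e \in gs a x :\: gs b y by rewrite in_setD !in_gsr -in_setD.
have [[w|v]] := hex _ _ hx hby (inr e) hin; rewrite in_setD ?in_gsl ?in_gsr.
  case/andP => wa wb; rewrite gs_mix => hw.
  have := sub _ hw; rewrite gsD => /andP [hwa _].
  have haB : a \in Bs1 by have := sub _ hx; rewrite gsD => /andP[].
  have := antichain m1 haB hwa (subsetUr _ _) => ea.
  by move: wa; rewrite ea setU11.
case/andP => vx vy; rewrite gs_exr => hv.
apply: (IH _ _ hv).
have -> : (v |: (x :\ e)) :\: y = (x :\: y) :\ e.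
  apply/setP => z; rewrite !inE.
  case: (eqVneq z v) => [->|nzv]; first by rewrite vy /= andbF.
  by case: (z \in y); case: (z != e); case: (z \in x).
by move: hn; rewrite (cardsD1 e) he add1n => -[].
Qed.
Theorem theorem2 (R : realFieldType) (E1 E2 : finType)
  (Bs1 : {set {set E1}}) (Bs2 : {set {set E2}}) :
  is_matroid Bs1 -> is_matroid Bs2 ->
  (has_nontrivial_hyperplane_split R (direct_sum_bases Bs1 Bs2) <->
   has_nontrivial_hyperplane_split R Bs1 \/ has_nontrivial_hyperplane_split R Bs2).
Proof.
move=> m1 m2; split; last first.
  case=> [[S1 [S2 h]]|[T1 [T2 h]]].
    by exists (direct_sum_bases S1 Bs2), (direct_sum_bases S2 Bs2); apply/(transfer1 _ _ _ _ m2).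
  by exists (direct_sum_bases Bs1 T1), (direct_sum_bases Bs1 T2); apply/(transfer2 _ _ _ _ m1).
case=> N1 [N2 [hs [n1 n2]]].
have [mN1 [mN2 [hu _]]] := hs.
have sub1 : {subset N1 <= direct_sum_bases Bs1 Bs2}.
  move=> B hB; apply: (vertex_out (R:=R)); apply/hu; left; exact: vertex_in.
have sub2 : {subset N2 <= direct_sum_bases Bs1 Bs2}.
  move=> B hB; apply: (vertex_out (R:=R)); apply/hu; right; exact: vertex_in.
have cov B : B \in direct_sum_bases Bs1 Bs2 -> (B \in N1) || (B \in N2).
  move=> hB; have [h|h] := proj1 (hu _) (vertex_in R hB); apply/orP;
    [left|right]; exact: vertex_out h.
have prop (N : {set {set (E1 + E2)%type}}) : {subset N <= direct_sum_bases Bs1 Bs2} ->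
    ~ same_set (base_polytope R N) (base_polytope R (direct_sum_bases Bs1 Bs2)) ->
    exists a y, [/\ a \in Bs1, y \in Bs2 & gs a y \notin N].
  move=> sub nn; apply: NNPP => hn; apply: nn.
  have -> : N = direct_sum_bases Bs1 Bs2.
    apply/setP => B; apply/idP/idP; first exact: sub.
    move=> /memD [a [y [aS yT ->]]]; apply/negPn/negP => h; apply: hn.
    by exists a, y; split.
  move=> x; exact: iff_refl.
have gen (N : {set {set (E1 + E2)%type}}) : is_matroid N -> {subset N <= direct_sum_bases Bs1 Bs2} -> forall a y,
    (gs a y \in N) = (a \in [set a | [exists y, gs a y \in N]]) &&
                     (y \in [set y | [exists a, gs a y \in N]]).
  move=> mN sub a y; apply/idP/andP => [h|[]].
    by split; rewrite inE; apply/existsP; [exists y|exists a].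
  rewrite !inE => /existsP [y1 h1] /existsP [a2 h2].
  exact: (rect mN sub m1 m2 h2 (erefl _) h1).
set S1 := [set a | [exists y, gs a y \in N1]].
set T1 := [set y | [exists a, gs a y \in N1]].
set S2 := [set a | [exists y, gs a y \in N2]].
set T2 := [set y | [exists a, gs a y \in N2]].
have char1 := gen N1 mN1 sub1.
have char2 := gen N2 mN2 sub2.
have [a1 [y1 [a1B y1B h1]]] := prop N1 sub1 n1.
have [a2 [y2 [a2B y2B h2]]] := prop N2 sub2 n2.
case: (boolP [forall a in Bs1, (a \in S1) && (a \in S2)]) => [AS|/forall_inPn [a aB ha]].
  move/forall_inP: AS => AS.
  have e (N : {set {set (E1 + E2)%type}}) (S : {set {set E1}}) (T : {set {set E2}}) : {subset N <= direct_sum_bases Bs1 Bs2} ->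
     (forall a y, (gs a y \in N) = (a \in S) && (y \in T)) ->
     (forall a, a \in Bs1 -> a \in S) ->
     N = direct_sum_bases Bs1 T.
    move=> sub hc hS; apply/setP => B; apply/idP/idP.
      move=> hB; have := sub _ hB; move=> /memD [a [y [aB yB eB]]].
      by move: hB; rewrite eB gsD aB hc => /andP[].
    move=> /memD [a [y [aB yT ->]]].
    by rewrite hc yT hS.
  have e1 : N1 = direct_sum_bases Bs1 T1.
    by apply: (e _ S1 _ sub1 char1) => a /AS /andP[].
  have e2 : N2 = direct_sum_bases Bs1 T2.
    by apply: (e _ S2 _ sub2 char2) => a /AS /andP[].
  right; exists T1, T2; apply/(transfer2 _ _ _ _ m1).
  by rewrite -e1 -e2.
case: (boolP [forall y in Bs2, (y \in T1) && (y \in T2)]) => [AT|/forall_inPn [y yB hy]].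
  move/forall_inP: AT => AT.
  have e (N : {set {set (E1 + E2)%type}}) (S : {set {set E1}}) (T : {set {set E2}}) : {subset N <= direct_sum_bases Bs1 Bs2} ->
     (forall a y, (gs a y \in N) = (a \in S) && (y \in T)) ->
     (forall y, y \in Bs2 -> y \in T) ->
     N = direct_sum_bases S Bs2.
    move=> sub hc hT; apply/setP => B; apply/idP/idP.
      move=> hB; have := sub _ hB; move=> /memD [a' [y' [aB' yB' eB]]].
      by move: hB; rewrite eB gsD yB' andbT hc => /andP[].
    move=> /memD [a' [y' [aS yB' ->]]].
    by rewrite hc aS hT.
  have e1 : N1 = direct_sum_bases S1 Bs2.
    by apply: (e _ _ T1 sub1 char1) => y /AT /andP[].
  have e2 : N2 = direct_sum_bases S2 Bs2.
    by apply: (e _ _ T2 sub2 char2) => y /AT /andP[].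
  left; exists S1, S2; apply/(transfer1 _ _ _ _ m2).
  by rewrite -e1 -e2.
exfalso.
have c1 a' y' : a' \in Bs1 -> y' \in Bs2 -> gs a' y' \notin N1 -> (a' \in S2) && (y' \in T2).
  move=> aB' yB' hn; rewrite -char2.
  have := cov (gs a' y'); rewrite gsD aB' yB' => /(_ isT).
  by rewrite (negbTE hn).
have c2 a' y' : a' \in Bs1 -> y' \in Bs2 -> gs a' y' \notin N2 -> (a' \in S1) && (y' \in T1).
  move=> aB' yB' hn; rewrite -char1.
  have := cov (gs a' y'); rewrite gsD aB' yB' => /(_ isT).
  by rewrite (negbTE hn) orbF.
rewrite negb_and in ha; rewrite negb_and in hy.
case/orP: ha => ha; case/orP: hy => hy.
- move: h2; rewrite char2.
  have n1' : gs a2 y \notin N1 by rewrite char1 (negbTE hy) andbF.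
  have n2' : gs a y2 \notin N1 by rewrite char1 (negbTE ha).
  have /andP[-> _] := c1 a2 y a2B yB n1'.
  by have /andP[_ ->] := c1 a y2 aB y2B n2'.
- have n' : gs a y \notin N1 by rewrite char1 (negbTE ha).
  have /andP[_ h] := c1 a y aB yB n'.
  by rewrite h in hy.
- have n' : gs a y \notin N2 by rewrite char2 (negbTE ha).
  have /andP[_ h] := c2 a y aB yB n'.
  by rewrite h in hy.
- move: h1; rewrite char1.
  have n1' : gs a1 y \notin N2 by rewrite char2 (negbTE hy) andbF.
  have n2' : gs a y1 \notin N2 by rewrite char2 (negbTE ha).
  have /andP[-> _] := c2 a1 y a1B yB n1'.
  by have /andP[_ ->] := c2 a y1 aB y1B n2'.
Qed.
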